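(* Let $X$ be a crowded (dense-in-itself) topological space containing an open dense subset $D$ which is metrizable. Then $X$ is $Disc(X)$-selectively pseudocompact if and only if $X$ is $Nwd(X)$-selectively pseudocompact, where $Disc(X)$ is the family of discrete subsets of $X$ and $Nwd(X)$ the family of nowhere dense subsets of $X$.
   Context: For a topological space $X$ and $\mathcal A\subseteq\mathcal P(X)$, $X$ is called $\mathcal A$-selectively pseudocompact if for every sequence $\langle U_n:n\in\omega\rangle$ of pairwise disjoint non-empty open subsets of $X$ one can choose sets $A_n\in\mathcal A$ with $A_n\subseteq U_n$ such that the family $\{A_n:n\in\omega\}$ has an accumulation point, i.e. there is a point $x\in X$ every neighbourhood of which meets $A_n$ for infinitely many $n$. *)

(* Defs.v *)
From HB Require Import structures.
From mathcomp Require Import all_boot all_order all_algebra.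
From mathcomp Require Import all_classical all_reals all_analysis.
From mathcomp Require Import Rstruct Rstruct_topology.
Set Implicit Arguments. Unset Strict Implicit. Unset Printing Implicit Defensive.
Import Order.TTheory GRing.Theory Num.Theory.
Local Open Scope classical_set_scope.
Local Open Scope ring_scope.

Section SelPc.
Variable T : topologicalType.

Definition crowded : Prop := forall x : T, ~ open [set x].

Definition discrete_subset (A : set T) : Prop := A `<=` isolated A.

Definition nowhere_dense (A : set T) : Prop := (closure A)° = set0.

Definition Disc : set (set T) := [set A | discrete_subset A].
Definition Nwd : set (set T) := [set A | nowhere_dense A].

Definition acc_point (A : nat -> set T) (x : T) : Prop :=
  forall U, nbhs x U -> infinite_set [set n | U `&` A n !=set0].

Definition sel_pseudocompact (calA : set (set T)) : Prop :=
  forall U : nat -> set T,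
    (forall n, open (U n) /\ U n !=set0) ->
    (forall n m, n <> m -> U n `&` U m = set0) ->
    exists A : nat -> set T,
      (forall n, calA (A n) /\ A n `<=` U n) /\ exists x, acc_point A x.

Definition metrizable_subspace (D : set T) : Prop :=
  exists d : T -> T -> Rdefinitions.R,
    (forall x y, D x -> D y -> 0 <= d x y) /\
    (forall x y, D x -> D y -> (d x y = 0 <-> x = y)) /\
    (forall x y, D x -> D y -> d x y = d y x) /\
    (forall x y z, D x -> D y -> D z -> d x z <= d x y + d y z) /\
    (forall W, W `<=` D ->
       ((exists V, open V /\ W = V `&` D) <->
        (forall x, W x -> exists2 e : Rdefinitions.R, 0 < e &
                   [set y | D y /\ d x y < e] `<=` W))).

End SelPc.

(* Main.v *)
Require Import Defs.
From mathcomp Require Import all_boot all_order all_algebra.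
From mathcomp Require Import all_classical all_reals all_analysis.
From mathcomp Require Import Rstruct Rstruct_topology lra.
Import Order.TTheory GRing.Theory Num.Theory.
Local Open Scope classical_set_scope.
Local Open Scope ring_scope.

Section Met.
Variables (X : topologicalType) (D : set X) (d : X -> X -> Rdefinitions.R).
Hypotheses (oD : open D)
  (d0 : forall x y, D x -> D y -> 0 <= d x y)
  (dE : forall x y, D x -> D y -> (d x y = 0 <-> x = y))
  (dC : forall x y, D x -> D y -> d x y = d y x)
  (dT : forall x y z, D x -> D y -> D z -> d x z <= d x y + d y z)
  (dtop : forall W, W `<=` D ->
       ((exists V, open V /\ W = V `&` D) <->
        (forall x, W x -> exists2 e : Rdefinitions.R, 0 < e &
                   [set y | D y /\ d x y < e] `<=` W))).

Definition mball (a : X) (r : Rdefinitions.R) := [set y | D y /\ d a y < r].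

Lemma mball_open a r : D a -> open (mball a r).
Proof.
move=> Da.
have [V [oV ->]] : exists V, open V /\ mball a r = V `&` D.
  have sub : mball a r `<=` D by move=> y [].
  apply: (proj2 (dtop _ sub)) => z [Dz dz].
  exists (r - d a z); first by rewrite subr_gt0.
  move=> y [Dy dy]; split => //.
  have := dT _ _ _ Da Dz Dy; lra.
exact: openI.
Qed.

Lemma mball_center a r : D a -> 0 < r -> mball a r a.
Proof. by move=> Da r0; split => //; rewrite (proj2 (dE _ _ Da Da) erefl). Qed.

Lemma nbhs_mball a N : D a -> nbhs a N -> exists2 e, 0 < e & mball a e `<=` N.
Proof.
move=> Da; rewrite nbhsE => -[V [oV Va] VN].
have [|e e0 sub] := (dtop _ (@subIsetr _ V D)).1 (ex_intro _ V (conj oV erefl)) a.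
  by split.
by exists e => // y /sub [] /VN.
Qed.


Lemma mball_nbhs a r : D a -> 0 < r -> nbhs a (mball a r).
Proof.
move=> Da r0; apply: open_nbhs_nbhs; split; first exact: mball_open.
exact: mball_center.
Qed.

Lemma sep_pt b y : D b -> D y -> y <> b -> exists2 N, nbhs y N & ~ N b.
Proof.
move=> Db Dy yb; exists (mball y (d y b)).
  apply: mball_nbhs => //.
  have := d0 _ _ Dy Db; rewrite le_eqVlt => /orP[/eqP h|//].
  by exfalso; apply: yb; apply/(dE _ _ Dy Db).
by move=> [_]; rewrite ltxx.
Qed.

Lemma disc_nwd (B : set X) : crowded X -> B `<=` D -> discrete_subset B ->
  nowhere_dense B.
Proof.
move=> cr BD dB; rewrite /nowhere_dense; apply/seteqP; split => // z Iz.
move: (Iz); rewrite /interior /=. rewrite nbhsE. move=> [ O0 [oO Oz] OB].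
have [b [Bb Ob]] := OB z Oz O0 (open_nbhs_nbhs (conj oO Oz)).
have [_ [V nV VB]] := dB b Bb.
move: nV; rewrite nbhsE => -[V' [oV' V'b] V'V].
apply: (cr b); rewrite openE => p ->.
have Q : nbhs b (O0 `&` V' `&` D).
  apply: open_nbhs_nbhs; split; last by split; [split|exact: BD].
  by apply: openI => //; exact: openI.
apply: filterS Q => y [[Oy V'y] Dy].
apply/not_notP => yb.
have [N Ny Nb] := sep_pt _ _ (BD _ Bb) Dy yb.
have : nbhs y (N `&` (O0 `&` V' `&` D)).
  apply: filterI => //; apply: open_nbhs_nbhs; split; last by split; [split|].
  by apply: openI => //; exact: openI.
move=> /(OB y Oy) [w [Bw [Nw [[_ V'w] _]]]].
have : (V `&` B) w by split => //; exact: V'V.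
by rewrite VB => wb; apply: Nb; rewrite -wb.
Qed.


Lemma nwd_disc (O0 A : set X) : open O0 -> O0 `<=` D -> A `<=` O0 ->
  nowhere_dense A ->
  exists B, [/\ discrete_subset B, B `<=` O0 &
    forall N, open N -> N `&` A !=set0 -> N `&` B !=set0].
Proof.
move=> oO OD AO nA.
pose good y (r : Rdefinitions.R) := 0 < r /\ mball y (2 * r) `<=` O0 `\` A.
have : forall y, exists r : Rdefinitions.R, (exists r, good y r) -> good y r.
  move=> y.
  have [[r g]|n] := pselect (exists r, good y r); first by exists r.
  by exists 0 => h; exfalso; exact: n h.
move=> /choice [rho rhoP].
pose G := [set y | D y /\ exists r, good y r].
pose P := fun B : set X => B `<=` G /\
  forall b c, B b -> B c -> b <> c -> rho b <= d b c.
have [B [[BG Bsep] Bmax]] : exists B, P B /\ forall C, B `<` C -> ~ P C.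
  apply: Zorn_bigcup => F FP Ftot; split.
    by move=> y [Y FY Yy]; exact: (FP Y FY).1.
  move=> b c [Y1 F1 b1] [Y2 F2 c2] bc.
  have [h|h] := Ftot _ _ F1 F2.
    by apply: (FP _ F2).2 => //; exact: h.
  by apply: (FP _ F1).2 => //; exact: h.
have rhoB b : B b -> good b (rho b) by move=> /BG [_ /rhoP].
have DB b : B b -> D b by move=> /BG [].
exists B; split.
- move=> b Bb; split; first exact: mem_set.
  have [r0 _] := rhoB b Bb.
  exists (mball b (rho b)); first exact: (mball_nbhs _ _ (DB _ Bb) r0).
  apply/seteqP; split => y.
    move=> [[Dy dy] By]; apply/not_notP => yb.
    have := Bsep _ _ Bb By (fun e => yb (esym e)).
    by move=> /le_lt_trans /(_ dy); rewrite ltxx.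
  by move=> ->; split => //; exact: (mball_center _ _ (DB _ Bb) r0).
- move=> b Bb; have [r0 sub] := rhoB b Bb.
  have : mball b (2 * rho b) b by apply: (mball_center _ _ (DB _ Bb)); lra.
  by move=> /sub [].
- move=> N oN [a [Na Aa]].
  have Da : D a := OD _ (AO _ Aa).
  have [e e0 eN] := nbhs_mball a (N `&` O0) Da
    (open_nbhs_nbhs (conj (openI oN oO) (conj Na (AO _ Aa)))).
  have e20 : 0 < e / 2 by rewrite divr_gt0.
  have [y [My ncl]] : exists y, mball a (e/2) y /\ ~ closure A y.
    apply: contrapT => H.
    have : (closure A)° a.
      rewrite /interior; apply: (filterS _ (mball_nbhs a (e/2) Da e20)).
      move=> y My; apply: contrapT => ncl; apply: H; exists y; split => //.
    by rewrite nA.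
  have [Dy dy] := My.
  move: ncl; rewrite /closure /= => /existsNP [K /not_implyP [Ky AK]].
  have yball : mball a e y by split => //; lra.
  have [e' e'0 sub'] := nbhs_mball y (K `&` mball a e) Dy
    (filterI Ky (open_nbhs_nbhs (conj (mball_open a e Da) yball))).
  have gy : good y (e'/2).
    split; first by rewrite divr_gt0.
    have -> : 2 * (e' / 2) = e' by lra.
    move=> z zb; have [Kz [Dz' daz]] := sub' z zb.
    split; first by have := (eN z (conj Dz' daz)).2.
    by move=> Az; apply: AK; exists z.
  have Gy : G y by split => //; exists (e'/2).
  have [By|nBy] := pselect (B y).
    by exists y; split => //; exact: (eN y yball).1.
  apply: contrapT => nNB.
  apply: (Bmax (B `|` [set y])).
    split; first by move=> z Bz; left.
    by move=> h; apply: nBy; apply: h; right.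
  split.
    by move=> z [/BG //| -> //].
  have [gy0 gysub] := rhoP y (ex_intro _ _ gy).
  have ya : 2 * rho y <= d y a.
    rewrite leNgt; apply/negP => h.
    by have := (gysub a (conj Da h)).2 Aa.
  have dya : d y a = d a y by apply: dC.
  move=> b c [Bb|->] [Bc|->] bc.
  + exact: Bsep.
  + rewrite leNgt; apply/negP => h; apply: nNB; exists b; split => //.
    have [rb0 bsub] := rhoB b Bb.
    have Db := DB _ Bb.
    have ba : 2 * rho b <= d b a.
      rewrite leNgt; apply/negP => h'.
      by have := (bsub a (conj Da h')).2 Aa.
    have := dT _ _ _ Db Dy Da.
    have := dC _ _ Da Db.
    by move=> dab tri; apply: (proj1 (eN b _)); split => //; lra.
  + rewrite leNgt; apply/negP => h; apply: nNB; exists c; split => //.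
    have Dc := DB _ Bc.
    have := dT _ _ _ Da Dy Dc.
    by move=> tri; apply: (proj1 (eN c _)); split => //; lra.
  + by [].
Qed.

End Met.

Theorem proposition1p6 (X : topologicalType) (D : set X) :
  @crowded X -> open D -> dense D -> metrizable_subspace D ->
  (sel_pseudocompact (@Disc X) <-> sel_pseudocompact (@Nwd X)).
Proof.
move=> cr oD dD [d [d0 [dE [dC [dT dtop]]]]].
have prep : forall U : nat -> set X,
    (forall n, open (U n) /\ U n !=set0) ->
    (forall n m, n <> m -> U n `&` U m = set0) ->
    (forall n, open (U n `&` D) /\ U n `&` D !=set0) /\
    (forall n m, n <> m -> (U n `&` D) `&` (U m `&` D) = set0).
  move=> U hU hdisj; split.
    move=> n; have [oU neU] := hU n; split; first exact: openI.
    exact: dD.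
  move=> n m nm; apply/seteqP; split => // z [[Un _] [Um _]].
  by rewrite -(hdisj n m nm); split.
split => H U hU hdisj; have [hU' hdisj'] := prep U hU hdisj;
  have [A [hA [x hx]]] := H _ hU' hdisj'.
- exists A; split; last by exists x.
  move=> n; have [dA AU] := hA n; split; last by move=> z /AU [].
  apply: (disc_nwd _ _ _ oD d0 dE dT dtop _ cr _ dA).
  by move=> z /AU [].
- have : forall n, exists B, [/\ discrete_subset B, B `<=` U n `&` D &
    forall N, open N -> N `&` A n !=set0 -> N `&` B !=set0].
    move=> n; have [nA AU] := hA n.
    apply: (nwd_disc _ _ _ oD dE dC dT dtop _ _ (hU' n).1 _ AU nA).
    by move=> z [].
  move=> /choice [B hB].
  exists B; split.
    move=> n; have [dB BU _] := hB n; split => //.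
    by move=> z /BU [].
  exists x => W; rewrite nbhsE => -[V [oV Vx] VW].
  have := hx V (open_nbhs_nbhs (conj oV Vx)).
  apply: sub_infinite_set => n /= VA.
  have [_ _ h] := hB n.
  have [z [Vz Bz]] := h V oV VA.
  by exists z; split => //; exact: VW.
Qed.
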